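(* Let $T>0$, $a\ge0$, and let $y$ be a non-negative, continuous, non-decreasing function on $[0,T)$. Let $F$ be a non-negative continuous function on $[2,+\infty)\times\mathbb{R}_+$ which is increasing with respect to its second variable. Assume that for every $0<t_0<t_1<T$ and every $p\in[2,+\infty)$, $$y(t_1)-y(t_0)\le a(t_1-t_0)+\int_{t_0}^{t_1}F(p,y(s))\,ds.$$ Let $\mu:\mathbb{R}_+\to\mathbb{R}_+$ be continuous, and assume that for every $x\ge0$ there exists $p_x\in[2,+\infty)$ such that $F(p_x,x)\le\mu(x)$. Then for all $0<t<T$, $$y(t)-y(0)\le at+\int_0^t\mu(y(s))\,ds.$$ *)

(* Defs.v *)
From Stdlib Require Import Reals.
From Coquelicot Require Import Coquelicot.
Open Scope R_scope.

Definition continuous_on2 (D : R * R -> Prop) (F : R -> R -> R) : Prop :=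
  forall z, D z ->
    filterlim (fun w : R * R => F (fst w) (snd w)) (within D (locally z))
      (locally (F (fst z) (snd z))).

(* Main.v *)
Require Import Defs.
From Stdlib Require Import Reals Lra.
From Coquelicot Require Import Coquelicot.
Open Scope R_scope.

Lemma ballR (x y e : R) : ball x e y <-> Rabs (y - x) < e.
Proof. reflexivity. Qed.

Lemma cont_on_eps (D : R -> Prop) f x : continuous_on D f -> D x ->
  forall eps, 0 < eps -> exists del, 0 < del /\
    forall z, D z -> Rabs (z - x) < del -> Rabs (f z - f x) < eps.
Proof.
  intros Hc Hx eps Heps.
  destruct (proj1 (filterlim_locally _ _) (Hc x Hx) (mkposreal eps Heps)) as [d Hd].
  exists d. split. apply cond_pos. intros z Dz Hz. apply (Hd z). exact Hz. exact Dz.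
Qed.

Lemma cont2_eps D F z : continuous_on2 D F -> D z ->
  forall eps, 0 < eps -> exists del, 0 < del /\
    forall w, D w -> Rabs (fst w - fst z) < del -> Rabs (snd w - snd z) < del ->
      Rabs (F (fst w) (snd w) - F (fst z) (snd z)) < eps.
Proof.
  intros Hc Hz eps Heps.
  destruct (proj1 (filterlim_locally _ _) (Hc z Hz) (mkposreal eps Heps)) as [d Hd].
  exists d. split. apply cond_pos. intros w Dw H1 H2. apply (Hd w). split; assumption. exact Dw.
Qed.

Lemma eps_cont f x : (forall eps, 0 < eps -> exists del, 0 < del /\
    forall z, Rabs (z - x) < del -> Rabs (f z - f x) < eps) -> continuous f x.
Proof.
  intros H. apply filterlim_locally. intros eps.
  destruct (H eps (cond_pos eps)) as [d [Hd Hz]].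
  exists (mkposreal d Hd). intros z Hb. apply Hz. exact Hb.
Qed.
Lemma Rmax_lip a b : Rabs (Rmax 0 a - Rmax 0 b) <= Rabs (a - b).
Proof.
  destruct (Rle_or_lt 0 a); destruct (Rle_or_lt 0 b);
  [rewrite (Rmax_right 0 a), (Rmax_right 0 b) by lra
  |rewrite (Rmax_right 0 a), (Rmax_left 0 b) by lra
  |rewrite (Rmax_left 0 a), (Rmax_right 0 b) by lra
  |rewrite (Rmax_left 0 a), (Rmax_left 0 b) by lra];
  unfold Rabs; repeat destruct Rcase_abs; lra.
Qed.

Lemma comp_eps (T : R) y G s :
  (forall t, 0 <= t < T -> 0 <= y t) ->
  continuous_on (fun t => 0 <= t < T) y ->
  (forall x, 0 <= x -> forall eps, 0 < eps -> exists del, 0 < del /\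
     forall z, 0 <= z -> Rabs (z - x) < del -> Rabs (G z - G x) < eps) ->
  0 < T -> s < T ->
  forall eps, 0 < eps -> exists del, 0 < del /\
    forall z, Rabs (z - s) < del -> Rabs (G (y (Rmax 0 z)) - G (y (Rmax 0 s))) < eps.
Proof.
  intros Hy Hc HG HT Hs eps Heps.
  assert (Dr : 0 <= Rmax 0 s < T).
  { split. apply Rmax_l. apply Rmax_lub_lt; lra. }
  destruct (HG (y (Rmax 0 s)) (Hy _ Dr) eps Heps) as [d2 [Hd2 H2]].
  destruct (cont_on_eps _ _ _ Hc Dr d2 Hd2) as [d1 [Hd1 H1]].
  exists (Rmin d1 (T - s)). split. apply Rmin_pos; lra.
  intros z Hz.
  assert (Hz1 : Rabs (z - s) < d1) by (eapply Rlt_le_trans; [exact Hz| apply Rmin_l]).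
  assert (Hz2 : Rabs (z - s) < T - s) by (eapply Rlt_le_trans; [exact Hz| apply Rmin_r]).
  assert (Dz : 0 <= Rmax 0 z < T).
  { split. apply Rmax_l. apply Rabs_def2 in Hz2. apply Rmax_lub_lt; lra. }
  apply H2. apply Hy; exact Dz.
  apply H1. exact Dz. eapply Rle_lt_trans. apply Rmax_lip. exact Hz1.
Qed.

Lemma comp_exRInt (T : R) y G u v :
  (forall t, 0 <= t < T -> 0 <= y t) ->
  continuous_on (fun t => 0 <= t < T) y ->
  (forall x, 0 <= x -> forall eps, 0 < eps -> exists del, 0 < del /\
     forall z, 0 <= z -> Rabs (z - x) < del -> Rabs (G z - G x) < eps) ->
  0 < T -> 0 <= u <= v -> v < T -> ex_RInt (fun s => G (y s)) u v.
Proof.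
  intros Hy Hc HG HT Huv HvT.
  apply ex_RInt_ext with (fun s => G (y (Rmax 0 s))).
  { intros x Hx. rewrite Rmin_left in Hx by lra. rewrite Rmax_right in Hx by lra.
    rewrite Rmax_right by lra. reflexivity. }
  apply (@ex_RInt_continuous R_CompleteNormedModule). intros z Hz.
  rewrite Rmin_left in Hz by lra. rewrite Rmax_right in Hz by lra.
  apply eps_cont. apply (comp_eps T); auto. lra.
Qed.

Lemma sweep (t0 t : R) (g : R -> R) : t0 <= t -> g t0 <= 0 ->
 (forall S, t0 < S <= t -> (forall v, t0 <= v < S -> g v <= 0) -> g S <= 0) ->
 (forall s, t0 <= s < t -> exists del, 0 < del /\
    forall h, 0 < h < del -> s + h <= t -> g (s + h) <= g s) ->
 g t <= 0.
Proof.
  intros Ht Hg0 Hleft Hloc.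
  set (E := fun u => t0 <= u <= t /\ forall v, t0 <= v <= u -> g v <= 0).
  assert (HE0 : E t0). { split. lra. intros v Hv. replace v with t0 by lra. exact Hg0. }
  destruct (completeness E) as [S [HSub HSl]].
  { exists t. intros u [Hu _]. lra. }
  { exists t0. exact HE0. }
  assert (S1 : t0 <= S) by (apply HSub; exact HE0).
  assert (S2 : S <= t). { apply HSl. intros u [Hu _]. lra. }
  assert (C1 : forall v, t0 <= v < S -> g v <= 0).
  { intros v Hv. destruct (Rle_or_lt (g v) 0) as [H|H]; [exact H|].
    exfalso. assert (S <= v).
    { apply HSl. intros u [Hu Hu2]. destruct (Rle_lt_dec u v) as [H'|H']; [exact H'|].
      assert (g v <= 0) by (apply Hu2; lra). lra. }
    lra. }
  assert (ES : E S).
  { split. lra. intros v Hv. destruct (Rle_lt_dec S v) as [H|H].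
    - replace v with S by lra. destruct (Rle_lt_dec S t0) as [H'|H'].
      + replace S with t0 by lra. exact Hg0.
      + apply Hleft. lra. exact C1.
    - apply C1. lra. }
  destruct (Rle_lt_dec t S) as [H|H].
  - replace t with S by lra. apply (proj2 ES). lra.
  - destruct (Hloc S) as [d [Hd Hd2]]. lra.
    set (h := Rmin d (t - S) / 2).
    assert (Hh1 : 0 < h) by (unfold h; assert (0 < Rmin d (t - S)) by (apply Rmin_pos; lra); lra).
    assert (Hh2 : h < d) by (unfold h; assert (Rmin d (t - S) <= d) by apply Rmin_l; lra).
    assert (Hh3 : h < t - S) by (unfold h; assert (Rmin d (t - S) <= t - S) by apply Rmin_r; lra).
    assert (E (S + h)).
    { split. lra. intros v Hv. destruct (Rle_lt_dec v S) as [H'|H'].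
      - apply (proj2 ES). lra.
      - replace v with (S + (v - S)) by ring. eapply Rle_trans. apply Hd2. lra. lra.
        apply (proj2 ES). lra. }
    assert (S + h <= S) by (apply HSub; assumption). lra.
Qed.

Theorem lemma10p1
  (T a : R) (y : R -> R) (F : R -> R -> R) (mu : R -> R)
  (hT : 0 < T) (ha : 0 <= a)
  (hy_nonneg : forall t, 0 <= t < T -> 0 <= y t)
  (hy_cont : continuous_on (fun t => 0 <= t < T) y)
  (hy_mono : forall s t, 0 <= s -> s <= t -> t < T -> y s <= y t)
  (hF_nonneg : forall p x, 2 <= p -> 0 <= x -> 0 <= F p x)
  (hF_cont : continuous_on2 (fun z => 2 <= fst z /\ 0 <= snd z) F)
  (hF_mono : forall p x x', 2 <= p -> 0 <= x -> x <= x' -> F p x <= F p x')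
  (hineq : forall t0 t1 p, 0 < t0 -> t0 < t1 -> t1 < T -> 2 <= p ->
     y t1 - y t0 <= a * (t1 - t0) + RInt (fun s => F p (y s)) t0 t1)
  (hmu_nonneg : forall x, 0 <= x -> 0 <= mu x)
  (hmu_cont : continuous_on (fun x => 0 <= x) mu)
  (hmu_bound : forall x, 0 <= x -> exists px, 2 <= px /\ F px x <= mu x) :
  forall t, 0 < t < T -> y t - y 0 <= a * t + RInt (fun s => mu (y s)) 0 t.
Proof.
  set (f := fun s => mu (y s)).
  assert (Hmu_eps : forall x, 0 <= x -> forall eps, 0 < eps -> exists del, 0 < del /\
     forall z, 0 <= z -> Rabs (z - x) < del -> Rabs (mu z - mu x) < eps).
  { intros x Hx. apply cont_on_eps; assumption. }
  assert (HF_eps : forall p, 2 <= p -> forall x, 0 <= x -> forall eps, 0 < eps -> exists del, 0 < del /\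
     forall z, 0 <= z -> Rabs (z - x) < del -> Rabs (F p z - F p x) < eps).
  { intros p Hp x Hx eps Heps.
    destruct (cont2_eps _ _ (p, x) hF_cont (conj Hp Hx) eps Heps) as [d [Hd H]].
    exists d. split. exact Hd. intros z Hz Hzx.
    apply (H (p, z)). simpl; split; assumption. simpl. rewrite Rminus_diag, Rabs_R0. exact Hd.
    simpl. exact Hzx. }
  assert (exf : forall u v, 0 <= u <= v -> v < T -> ex_RInt f u v).
  { intros u v H1 H2. unfold f. apply (comp_exRInt T); assumption. }
  assert (exFp : forall p u v, 2 <= p -> 0 <= u <= v -> v < T -> ex_RInt (fun s => F p (y s)) u v).
  { intros p u v Hp H1 H2. apply (comp_exRInt T); auto. }
  assert (f_eps : forall s, 0 < s < T -> forall eps, 0 < eps -> exists del, 0 < del /\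
     forall z, 0 < z -> Rabs (z - s) < del -> Rabs (f z - f s) < eps).
  { intros s Hs eps Heps.
    destruct (comp_eps T y mu s hy_nonneg hy_cont Hmu_eps hT (proj2 Hs) eps Heps) as [d [Hd H]].
    exists d. split. exact Hd. intros z Hz Hzs. specialize (H z Hzs).
    rewrite (Rmax_right 0 z), (Rmax_right 0 s) in H by lra. exact H. }
  assert (Chas : forall u v w, 0 <= u <= v -> v <= w -> w < T ->
    RInt f u w = RInt f u v + RInt f v w).
  { intros u v w H1 H2 H3. rewrite <- (RInt_Chasles f u v w).
    reflexivity. apply exf; lra. apply exf; lra. }
  assert (Ipos : forall u v, 0 <= u <= v -> v < T -> 0 <= RInt f u v).
  { intros u v H1 H2. apply RInt_ge_0. lra. apply exf; lra.
    intros x Hx. unfold f. apply hmu_nonneg, hy_nonneg. lra. }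
  assert (StepA : forall t0 t, 0 < t0 < t -> t < T -> forall e, 0 < e ->
     y t - y t0 <= a * (t - t0) + RInt f t0 t + e).
  { intros t0 t Ht0 HtT e He.
    set (eps := e / (t - t0)).
    assert (Heps : 0 < eps) by (unfold eps; apply Rdiv_lt_0_compat; lra).
    set (g := fun s => y s - y t0 - a * (s - t0) - RInt f t0 s - eps * (s - t0)).
    assert (Hgt : g t <= 0).
    { apply (sweep t0 t g). lra.
      - unfold g. rewrite RInt_point. unfold zero; simpl. lra.
      - intros S HS Hv. destruct (Rle_or_lt (g S) 0) as [H|H]; [exact H|exfalso].
        assert (DS : 0 <= S < T) by lra.
        destruct (cont_on_eps _ _ _ hy_cont DS (g S) H) as [d [Hd Hd2]].
        set (u := S - Rmin d (S - t0) / 2).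
        assert (Hm : 0 < Rmin d (S - t0)) by (apply Rmin_pos; lra).
        assert (Hm1 : Rmin d (S - t0) <= d) by apply Rmin_l.
        assert (Hm2 : Rmin d (S - t0) <= S - t0) by apply Rmin_r.
        assert (Hu : t0 <= u < S) by (unfold u; lra).
        assert (Hgu := Hv u Hu).
        assert (Hyu : Rabs (y u - y S) < g S).
        { apply Hd2. lra. unfold u. rewrite Rabs_left by lra. lra. }
        apply Rabs_def2 in Hyu.
        assert (HC := Chas t0 u S ltac:(lra) ltac:(lra) ltac:(lra)).
        assert (HI := Ipos u S ltac:(lra) ltac:(lra)).
        unfold g in *. assert (eps * (S - t0) >= eps * (u - t0)) by nra.
        assert (a * (S - t0) >= a * (u - t0)) by nra.
        lra.
      - intros s Hs.
        assert (Hs0 : 0 < s < T) by lra.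
        destruct (f_eps s Hs0 (eps / 2) ltac:(lra)) as [d [Hd Hd2]].
        exists d. split. exact Hd. intros h Hh Hst.
        assert (Dx : 0 <= y (s + h)) by (apply hy_nonneg; lra).
        destruct (hmu_bound _ Dx) as [p [Hp Hpb]].
        assert (H1 := hineq s (s + h) p ltac:(lra) ltac:(lra) ltac:(lra) Hp).
        assert (H2 : RInt (fun u => F p (y u)) s (s + h) <= h * F p (y (s + h))).
        { eapply Rle_trans. apply RInt_le with (g := fun _ => F p (y (s + h))).
          lra. apply exFp; lra. apply ex_RInt_const.
          intros x Hx. apply hF_mono. exact Hp. apply hy_nonneg; lra. apply hy_mono; lra.
          rewrite RInt_const. unfold scal; simpl; unfold mult; simpl. right; ring. }
        assert (H3 : Rabs (f (s + h) - f s) < eps / 2).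
        { apply Hd2. lra. rewrite Rabs_right by lra. lra. }
        apply Rabs_def2 in H3.
        assert (H4 : h * (f s - eps / 2) <= RInt f s (s + h)).
        { replace (h * (f s - eps / 2)) with (RInt (fun _ => f s - eps / 2) s (s + h)).
          apply RInt_le. lra. apply ex_RInt_const. apply exf; lra.
          intros x Hx. assert (Hx2 : Rabs (f x - f s) < eps / 2).
          { apply Hd2. lra. rewrite Rabs_right by lra. lra. }
          apply Rabs_def2 in Hx2. lra.
          rewrite RInt_const. unfold scal; simpl; unfold mult; simpl. ring. }
        assert (HC := Chas t0 s (s + h) ltac:(lra) ltac:(lra) ltac:(lra)).
        assert (H5 : h * F p (y (s + h)) <= h * (f s + eps / 2)).
        { apply Rmult_le_compat_l. lra. unfold f in *. lra. }
        unfold g. rewrite HC. nra. }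
    unfold g in Hgt. unfold eps in Hgt.
    replace (e / (t - t0) * (t - t0)) with e in Hgt by (field; lra). lra. }
  intros t Ht. apply Rle_plus_epsilon. intros e He.
  assert (D0 : 0 <= 0 < T) by lra.
  destruct (cont_on_eps _ _ _ hy_cont D0 (e / 2) ltac:(lra)) as [d [Hd Hd2]].
  set (t0 := Rmin d t / 2).
  assert (Hm : 0 < Rmin d t) by (apply Rmin_pos; lra).
  assert (Hm1 : Rmin d t <= d) by apply Rmin_l.
  assert (Hm2 : Rmin d t <= t) by apply Rmin_r.
  assert (Ht0 : 0 < t0 < t) by (unfold t0; lra).
  assert (Hy0 : Rabs (y t0 - y 0) < e / 2).
  { apply Hd2. lra. rewrite Rminus_0_r, Rabs_right by lra. unfold t0; lra. }
  apply Rabs_def2 in Hy0.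
  assert (HA := StepA t0 t Ht0 (proj2 Ht) (e / 2) ltac:(lra)).
  assert (HC := Chas 0 t0 t ltac:(lra) ltac:(lra) ltac:(lra)).
  assert (HI := Ipos 0 t0 ltac:(lra) ltac:(lra)).
  fold f. rewrite HC. assert (a * t0 >= 0) by nra. lra.
Qed.
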